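(* Let $N_{D\Lambda}$ be the smallest positive integer $N$ such that $N(x,x)\in2\mathbb Z$ for all $x\in\Lambda^\vee$, and $N'_{D\Lambda}$ the smallest positive integer $N$ with $Nx\in\Lambda$ for all $x\in\Lambda^\vee$ (the exponent of $G_\Lambda$). Then $N_{D\Lambda}=D_zf_\rho$, and $N'_{D\Lambda}=N_{D\Lambda}$ if $b_z$ is odd, while $N'_{D\Lambda}=N_{D\Lambda}/2$ if $b_z$ is even.
   Context: Let $z\in\mathcal H$ with $a_zz^2+b_zz+c_z=0$ for coprime integers $a_z>0,b_z,c_z$, $D_z=4a_zc_z-b_z^2>0$, and $f_\rho$ a positive integer. $\Lambda$ is the lattice with basis $e_2,e_1$ and Gram matrix $f_\rho\begin{pmatrix}2a_z&b_z\\ b_z&2c_z\end{pmatrix}$, with the bilinear form extended $\mathbb Q$-linearly; $\Lambda^\vee\subset\Lambda\otimes\mathbb Q$ is its dual lattice and $G_\Lambda=\Lambda^\vee/\Lambda$. *)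

(* Defs.v *)
From mathcomp Require Import all_boot all_order all_algebra.
Set Implicit Arguments. Unset Strict Implicit. Unset Printing Implicit Defensive.
Import Order.TTheory GRing.Theory Num.Theory.
Local Open Scope ring_scope.

(* Λ ⊗ Q is identified with rat * rat via coordinates w.r.t. the basis (e2, e1).
   The bilinear form has Gram matrix f * [[2a, b], [b, 2c]] in this basis. *)
Definition bform (a b c : int) (f : nat) (x y : rat * rat) : rat :=
  f%:R * (2 * a%:~R * x.1 * y.1 + b%:~R * (x.1 * y.2 + x.2 * y.1)
          + 2 * c%:~R * x.2 * y.2).

Definition in_lattice (x : rat * rat) : Prop :=
  x.1 \is a Num.int /\ x.2 \is a Num.int.

Definition in_dual (a b c : int) (f : nat) (x : rat * rat) : Prop :=
  forall y, in_lattice y -> bform a b c f x y \is a Num.int.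

Definition level_prop (a b c : int) (f : nat) (N : int) : Prop :=
  0 < N /\ forall x, in_dual a b c f x ->
    (N%:~R * bform a b c f x x) / 2 \is a Num.int.

Definition exponent_prop (a b c : int) (f : nat) (N : int) : Prop :=
  0 < N /\ forall x, in_dual a b c f x ->
    in_lattice (N%:~R * x.1, N%:~R * x.2).

Definition is_least (P : int -> Prop) (n : int) : Prop :=
  P n /\ forall m, P m -> n <= m.

(* Main.v *)
Require Import Defs.
From mathcomp Require Import all_boot all_order all_algebra.
From mathcomp Require Import ring lra zify.
Import Order.TTheory GRing.Theory Num.Theory.
Local Open Scope ring_scope.

Lemma L1 (M k : int) : M != 0 -> ((k%:~R / M%:~R : rat) \is a Num.int) -> (M %| k)%Z.
Proof.
move=> M0 /intrP [z hz]; apply/dvdzP; exists z.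
have M0' : (M%:~R : rat) != 0 by rewrite intr_eq0.
apply/eqP; rewrite -(eqr_int rat) rmorphM /= -hz mulfVK //.
Qed.

Lemma L1' (N M k : int) : M != 0 -> ((N%:~R * (k%:~R / M%:~R) : rat) \is a Num.int) -> (M %| N * k)%Z.
Proof. by move=> M0 h; apply: L1 => //; rewrite rmorphM /= -mulrA. Qed.

Lemma gcd3 (M N a b c : int) : gcdz (gcdz a b) c = 1 ->
  (M %| N * a)%Z -> (M %| N * b)%Z -> (M %| N * c)%Z -> (M %| N)%Z.
Proof.
move=> g ha hb hc.
have [u [v huv]] := Bezoutz (gcdz a b) c.
have [u' [v' huv']] := Bezoutz a b.
rewrite g -huv' in huv.
have -> : N = (u * u') * (N * a) + (u * v') * (N * b) + v * (N * c).
  by rewrite -[N in LHS]mulr1 -huv; ring.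
by apply: rpredD; [apply: rpredD|]; apply: dvdz_mull.
Qed.

Lemma dvd_le (M N : int) : 0 < M -> 0 < N -> (M %| N)%Z -> M <= N.
Proof.
move=> hM hN /dvdzP [q hq]; rewrite hq in hN *.
have hq0 : 0 < q by rewrite -(pmulr_lgt0 _ hM).
by rewrite -[M in M <= _]mul1r ler_pM2r // -gtz0_ge1.
Qed.

Lemma Mcast (a b c : int) (f : nat) :
  (((4 * a * c - b ^+ 2) * f%:Z)%:~R : rat) = (4 * a%:~R * c%:~R - b%:~R ^+ 2) * f%:R.
Proof. by rewrite !(rmorphM, rmorphB, rmorphXn) /=. Qed.

Lemma K1 a b c f (x : rat * rat) :
  (4 * a%:~R * c%:~R - b%:~R ^+ 2) * f%:R * x.1 =
   2 * c%:~R * bform a b c f x (1, 0) - b%:~R * bform a b c f x (0, 1).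
Proof. rewrite /bform /=; ring. Qed.
Lemma K2 a b c f (x : rat * rat) :
  (4 * a%:~R * c%:~R - b%:~R ^+ 2) * f%:R * x.2 =
   2 * a%:~R * bform a b c f x (0, 1) - b%:~R * bform a b c f x (1, 0).
Proof. rewrite /bform /=; ring. Qed.
Lemma K3 a b c f (x : rat * rat) :
  (4 * a%:~R * c%:~R - b%:~R ^+ 2) * f%:R * bform a b c f x x / 2 =
   c%:~R * bform a b c f x (1, 0) ^+ 2 - b%:~R * bform a b c f x (1, 0) * bform a b c f x (0, 1)
   + a%:~R * bform a b c f x (0, 1) ^+ 2.
Proof. rewrite /bform /=; field; by []. Qed.
Lemma K4 a b c f (x y : rat * rat) :
  bform a b c f x y = y.1 * bform a b c f x (1, 0) + y.2 * bform a b c f x (0, 1).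
Proof. rewrite /bform /=; ring. Qed.

Definition tv (a b c : int) (f : nat) (u v : int) : rat * rat :=
  ((2 * c * u - b * v)%:~R / (((4 * a * c - b ^+ 2) * f%:Z)%:~R),
   (2 * a * v - b * u)%:~R / (((4 * a * c - b ^+ 2) * f%:Z)%:~R)).

Lemma tv1 a b c f u v : ((4 * a * c - b ^+ 2) * f%:Z) != 0 ->
  bform a b c f (tv a b c f u v) (1, 0) = u%:~R /\
  bform a b c f (tv a b c f u v) (0, 1) = v%:~R.
Proof.
move=> M0.
have : (((4 * a * c - b ^+ 2) * f%:Z)%:~R : rat) != 0 by rewrite intr_eq0.
rewrite /tv /bform /= Mcast !(rmorphM, rmorphB) /= => M0'.
by split; field; move: M0'; rewrite mulf_eq0 negb_or andbC.
Qed.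

Lemma tv_dual a b c f u v : ((4 * a * c - b ^+ 2) * f%:Z) != 0 ->
  in_dual a b c f (tv a b c f u v).
Proof.
move=> M0 y [y1 y2]; have [h1 h2] := tv1 a b c f u v M0.
by rewrite K4 h1 h2 rpredD ?rpredM ?intr_int.
Qed.

Lemma dual_uv a b c f x : in_dual a b c f x ->
  exists u v : int, bform a b c f x (1, 0) = u%:~R /\ bform a b c f x (0, 1) = v%:~R.
Proof.
move=> hx.
have l10 : in_lattice (1, 0) by split; rewrite /= ?rpred0 ?rpred1.
have l01 : in_lattice (0, 1) by split; rewrite /= ?rpred0 ?rpred1.
have /intrP [u hu] := hx _ l10.
have /intrP [v hv] := hx _ l01.
by exists u, v.
Qed.

Lemma K5 a k c f (x : rat * rat) :
  (((2 * a * c - 2 * k ^+ 2) * f%:Z)%:~R : rat) * x.1 =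
  c%:~R * bform a (k * 2) c f x (1, 0) - k%:~R * bform a (k * 2) c f x (0, 1).
Proof. rewrite /bform /= !(rmorphM, rmorphB, rmorphXn) /=; ring. Qed.
Lemma K6 a k c f (x : rat * rat) :
  (((2 * a * c - 2 * k ^+ 2) * f%:Z)%:~R : rat) * x.2 =
  a%:~R * bform a (k * 2) c f x (0, 1) - k%:~R * bform a (k * 2) c f x (1, 0).
Proof. rewrite /bform /= !(rmorphM, rmorphB, rmorphXn) /=; ring. Qed.

Lemma Q_lower a b c f (N : int) : ((4 * a * c - b ^+ 2) * f%:Z) != 0 ->
  (forall x, in_dual a b c f x -> (N%:~R * bform a b c f x x) / 2 \is a Num.int) ->
  forall u v, ((4 * a * c - b ^+ 2) * f%:Z %| N * (c * u ^+ 2 - b * u * v + a * v ^+ 2))%Z.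
Proof.
move=> M0 hN u v; apply (L1' _ _ _ M0).

have Mr0 : (((4 * a * c - b ^+ 2) * f%:Z)%:~R : rat) != 0 by rewrite intr_eq0.
have [fn0 dn0] : (f%:R : rat) != 0 /\ (4 * a%:~R * c%:~R - b%:~R ^+ 2 : rat) != 0.
  by move: Mr0; rewrite Mcast mulf_eq0 negb_or => /andP[].
have := hN _ (tv_dual a b c f u v M0).
have [h1 h2] := tv1 a b c f u v M0.
have e := K3 a b c f (tv a b c f u v); rewrite h1 h2 in e.
rewrite -mulrA; congr (_ \is a _); congr (_ * _).
rewrite Mcast.
have -> : bform a b c f (tv a b c f u v) (tv a b c f u v) / 2 =
  (c%:~R * u%:~R ^+ 2 - b%:~R * u%:~R * v%:~R + a%:~R * v%:~R ^+ 2) /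
  ((4 * a%:~R * c%:~R - b%:~R ^+ 2) * f%:R :> rat).
  by rewrite -e; field; rewrite fn0 dn0.
by congr (_ / _); rewrite !(rmorphD, rmorphN, rmorphB, rmorphM) /=; ring.
Qed.

Lemma E_lower a b c f (N : int) : ((4 * a * c - b ^+ 2) * f%:Z) != 0 ->
  (forall x, in_dual a b c f x -> in_lattice (N%:~R * x.1, N%:~R * x.2)) ->
  forall u v, ((4 * a * c - b ^+ 2) * f%:Z %| N * (2 * c * u - b * v))%Z /\
              ((4 * a * c - b ^+ 2) * f%:Z %| N * (2 * a * v - b * u))%Z.
Proof.
move=> M0 hN u v; have [/= e1 e2] := hN _ (tv_dual a b c f u v M0).
by split; apply (L1' _ _ _ M0).
Qed.

Lemma E_lower2 a b c f (N : int) : gcdz (gcdz a b) c = 1 ->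
  ((4 * a * c - b ^+ 2) * f%:Z) != 0 ->
  (forall x, in_dual a b c f x -> in_lattice (N%:~R * x.1, N%:~R * x.2)) ->
  ((4 * a * c - b ^+ 2) * f%:Z %| N * b)%Z /\ ((4 * a * c - b ^+ 2) * f%:Z %| 2 * N)%Z.
Proof.
move=> hg M0 hN.
have [h1 h2] := E_lower a b c f N M0 hN 1 0.
have [h3 h4] := E_lower a b c f N M0 hN 0 1.
have hb : ((4 * a * c - b ^+ 2) * f%:Z %| N * b)%Z.
  by rewrite -rpredN (_ : - (N * b) = N * (2 * a * 0 - b * 1)) //; ring.
split=> //.
apply: (gcd3 _ _ a b c hg).
- by rewrite (_ : 2 * N * a = N * (2 * a * 1 - b * 0)) //; ring.
- by rewrite -mulrA; apply: dvdz_mull.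
- by rewrite (_ : 2 * N * c = N * (2 * c * 1 - b * 0)) //; ring.
Qed.

Theorem lemma2p4p3 (a b c : int) (f : nat) :
  0 < a ->
  gcdz (gcdz a b) c = 1 ->
  0 < 4 * a * c - b ^+ 2 ->
  (0 < f)%N ->
  let D := 4 * a * c - b ^+ 2 in
  is_least (level_prop a b c f) (D * f%:Z) /\
  (~~ (2 %| b)%Z -> is_least (exponent_prop a b c f) (D * f%:Z)) /\
  ((2 %| b)%Z -> is_least (exponent_prop a b c f) ((D * f%:Z) %/ 2)%Z).
Proof.
move=> ha hg hD hf D; rewrite /D.
have Mpos : 0 < (4 * a * c - b ^+ 2) * f%:Z by rewrite mulr_gt0 // ltz_nat.
have M0 : (4 * a * c - b ^+ 2) * f%:Z != 0 by rewrite gt_eqF.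
split; [split; [split=> // | ] | split].
- move=> x /dual_uv [u [v [hu hv]]].
  rewrite Mcast K3 hu hv.
  by rewrite rpredD ?rpredB ?rpredM ?rpredX ?intr_int.
- move=> N [Npos hN]; apply: dvd_le => //.
  have h := Q_lower a b c f N M0 hN.
  have hc : ((4 * a * c - b ^+ 2) * f%:Z %| N * c)%Z.
    by rewrite (_ : N * c = N * (c * 1 ^+ 2 - b * 1 * 0 + a * 0 ^+ 2)) //; ring.
  have ha' : ((4 * a * c - b ^+ 2) * f%:Z %| N * a)%Z.
    by rewrite (_ : N * a = N * (c * 0 ^+ 2 - b * 0 * 1 + a * 1 ^+ 2)) //; ring.
  have hb : ((4 * a * c - b ^+ 2) * f%:Z %| N * b)%Z.
    have -> : N * b = N * a + N * c - N * (c * 1 ^+ 2 - b * 1 * 1 + a * 1 ^+ 2) by ring.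
    by rewrite rpredB ?rpredD.
  exact: gcd3 hg ha' hb hc.
- move=> hb; split.
    split=> // x /dual_uv [u [v [hu hv]]]; split; rewrite /=.
      by rewrite Mcast K1 hu hv rpredB ?rpredM ?intr_int.
    by rewrite Mcast K2 hu hv rpredB ?rpredM ?intr_int.
  move=> N [Npos hN]; apply: dvd_le => //.
  have [h1 h2] := E_lower2 a b c f N hg M0 hN.
  have hm : (b %% 2)%Z = 1.
    have h0 := modz_ge0 b (isT : (2:int) != 0).
    have hl := ltz_pmod b (isT : (0:int) < 2).
    have : (b %% 2)%Z != 0 by apply: contra hb => /eqP /dvdz_mod0P.
    lia.
  have -> : N = N * b - (b %/ 2)%Z * (2 * N).
    by rewrite [b in N * b](divz_eq b 2) hm; ring.
  by rewrite rpredB // dvdz_mull.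
- move=> /dvdzP [k hk]; subst b.
  set K := (2 * a * c - 2 * k ^+ 2) * f%:Z.
  have eM : (4 * a * c - (k * 2) ^+ 2) * f%:Z = K * 2 by rewrite /K; ring.
  have Kpos : 0 < K by move: Mpos; rewrite eM pmulr_lgt0.
  rewrite eM mulzK //; split.
    split=> // x /dual_uv [u [v [hu hv]]]; split; rewrite /=.
      by rewrite K5 hu hv rpredB ?rpredM ?intr_int.
    by rewrite K6 hu hv rpredB ?rpredM ?intr_int.
  move=> N [Npos hN]; apply: dvd_le => //.
  have [_ h2] := E_lower2 a (k * 2) c f N hg M0 hN.
  by move: h2; rewrite eM mulrC dvdz_mul2r.
Qed.
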